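(* Let $X$ be a Banach space, $(A_n)_{n\in\mathbb{Z}}$ a sequence of invertible bounded linear operators on $X$ with $\sup_n\lVert A_n\rVert<\infty$ admitting an exponential dichotomy, and let $1\le p<\infty$. For each sequence $(y_n)_{n\in\mathbb{Z}}\subset X$ with $\sum_{n\in\mathbb{Z}}\lVert y_{n+1}-A_ny_n\rVert^p<\infty$, there exists a unique sequence $(x_n)_{n\in\mathbb{Z}}\subset X$ with $x_{n+1}=A_nx_n$ for all $n\in\mathbb{Z}$ and $\sum_{n\in\mathbb{Z}}\lVert x_n-y_n\rVert^p<\infty$.
   Context: Exponential dichotomy: with $\mathcal A(m,n)=A_{m-1}\cdots A_n$ ($m>n$), $\mathrm{Id}$ ($m=n$), $A_m^{-1}\cdots A_{n-1}^{-1}$ ($m<n$), there exist projections $P_m$ on $X$ with $P_{m+1}A_m=A_mP_m$ for all $m$ and constants $C,\lambda>0$ with $\lVert\mathcal A(m,n)P_n\rVert\le Ce^{-\lambda(m-n)}$ for $m\ge n$ and $\lVert\mathcal A(m,n)(\mathrm{Id}-P_n)\rVert\le Ce^{-\lambda(n-m)}$ for $m\le n$. *)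

(* Defs.v *)
From HB Require Import structures.
From mathcomp Require Import all_boot all_order all_algebra.
From mathcomp Require Import all_classical all_reals all_analysis.
Set Implicit Arguments. Unset Strict Implicit. Unset Printing Implicit Defensive.
Import Order.TTheory GRing.Theory Num.Theory.
Import numFieldNormedType.Exports.
Local Open Scope classical_set_scope.
Local Open Scope ring_scope.

Section Defs.
Variables (R : realType) (X : normedModType R).

Definition bounded_linear (f : X -> X) : Prop :=
  (forall (a : R) (u v : X), f (a *: u + v) = a *: f u + f v) /\
  exists M : R, forall x : X, `|f x| <= M * `|x|.

(* forward products: prodA A n k = A_{n+k-1} ... A_n = A(n+k, n) *)
Fixpoint prodA (A : int -> X -> X) (n : int) (k : nat) : X -> X :=
  match k with
  | O => id
  | S k' => fun x => A (n + k'%:Z) (prodA A n k' x)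
  end.

(* backward products: prodAinv Ainv n k = A_{n-k}^{-1} ... A_{n-1}^{-1} = A(n-k, n) *)
Fixpoint prodAinv (Ainv : int -> X -> X) (n : int) (k : nat) : X -> X :=
  match k with
  | O => id
  | S k' => fun x => Ainv (n - k'.+1%:Z) (prodAinv Ainv n k' x)
  end.

Definition cocycle (A Ainv : int -> X -> X) (m n : int) : X -> X :=
  if (n <= m)%R then prodA A n `|m - n|%N else prodAinv Ainv n `|n - m|%N.

Definition exp_dichotomy (A Ainv : int -> X -> X) : Prop :=
  exists P : int -> X -> X,
    (forall n, bounded_linear (P n) /\ (forall x, P n (P n x) = P n x)) /\
    (forall m x, P (m + 1) (A m x) = A m (P m x)) /\
    exists C lam : R, 0 < C /\ 0 < lam /\
      (forall m n : int, (n <= m)%R -> forall x : X,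
         `|cocycle A Ainv m n (P n x)| <= C * expR (- lam * (m - n)%:~R) * `|x|) /\
      (forall m n : int, (m <= n)%R -> forall x : X,
         `|cocycle A Ainv m n (x - P n x)| <= C * expR (- lam * (n - m)%:~R) * `|x|).

Definition sumZ_finite (f : int -> R) : Prop :=
  (\esum_(i in [set: int]) (f i)%:E < +oo)%E.

End Defs.

(* Main.v *)
Require Import Defs.
From HB Require Import structures.
From mathcomp Require Import all_boot all_order all_algebra.
From mathcomp Require Import all_classical all_reals all_analysis.
From mathcomp Require Import ring lra.
Import Order.TTheory GRing.Theory Num.Theory.
Import numFieldNormedType.Exports.
Local Open Scope classical_set_scope.
Local Open Scope ring_scope.
Set Implicit Arguments. Unset Strict Implicit. Unset Printing Implicit Defensive.
Section Lin.
Variables (R : realType) (X : normedModType R) (f : X -> X).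
Hypothesis hf : bounded_linear f.

Lemma lin_add u v : f (u + v) = f u + f v.
Proof. by have := (proj1 hf) 1 u v; rewrite scale1r => ->; rewrite scale1r. Qed.

Lemma lin0 : f 0 = 0.
Proof. by have := lin_add 0 0; rewrite addr0 => /eqP; rewrite -subr_eq subrr => /eqP <-. Qed.

Lemma linN u : f (- u) = - f u.
Proof. by have := (proj1 hf) (-1) u 0; rewrite addr0 lin0 addr0 !scaleN1r. Qed.

Lemma linB u v : f (u - v) = f u - f v.
Proof. by rewrite lin_add linN. Qed.

Lemma lin_sum (N : nat) (g : nat -> X) :
  f (\sum_(j < N) g j) = \sum_(j < N) f (g j).
Proof. exact: (big_morph f lin_add lin0). Qed.

Lemma lin_bnd : exists M, 0 < M /\ forall x, `|f x| <= M * `|x|.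
Proof.
case: hf => _ [M hM]; exists (`|M| + 1); split; first by rewrite ltr_wpDl.
move=> x; apply: le_trans (hM x) _; apply: ler_wpM2r => //.
by rewrite (le_trans (ler_norm M)) // lerDl.
Qed.

Lemma lin_cvg (u : nat -> X) (l : X) : u @ \oo --> l -> (f \o u) @ \oo --> f l.
Proof.
have [M [M0 hM]] := lin_bnd.
move=> /cvgrPdist_lt hu; apply/cvgrPdist_lt => e e0.
have e'0 : 0 < e / M by rewrite divr_gt0.
near=> t.
rewrite /= -linB; apply: le_lt_trans (hM _) _.
rewrite -ltr_pdivlMl // mulrC.
by near: t; apply: hu.
Unshelve. all: by end_near. Qed.

End Lin.
From mathcomp Require Import zify.

Lemma small0 (R : realType) (a K lam : R) : 0 <= a -> 0 < lam ->
  (forall k : nat, a <= K * expR (- lam * k%:R)) -> a = 0.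
Proof.
move=> a0 l0 h; apply/eqP; rewrite eq_le a0 andbT leNgt; apply/negP => apos.
set k := (Num.trunc (K / (a * lam))).+1.
have hk : K / (a * lam) < k%:R := truncnS_gt _.
have al0 : 0 < a * lam by rewrite mulr_gt0.
rewrite ltr_pdivrMr // in hk.
have hh := h k.
have e1 : 1 + lam * k%:R <= expR (lam * k%:R) := expR_ge1Dx _.
have e2 : expR (- lam * k%:R) * expR (lam * k%:R) = 1 by rewrite -expRD mulNr addNr expR0.
have E0 : 0 < expR (lam * k%:R) := expR_gt0 _.
set E := expR (lam * k%:R) in e1 e2 E0.
set F := expR (- lam * k%:R) in hh e2.
have h1 : 0 <= a * (E - 1 - lam * k%:R) by apply: mulr_ge0; [exact: ltW | lra].
have h2 : 0 <= E * (K * F - a) by apply: mulr_ge0; [exact: ltW | rewrite subr_ge0].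
have : a * E <= K.
  by move: h2; rewrite mulrBr mulrCA (mulrC E F) e2 mulr1 subr_ge0 mulrC.
nra.
Qed.
Section Main.
Variables (R : realType) (X : normedModType R) (A Ainv : int -> X -> X).
Hypothesis hA : forall n, bounded_linear (A n).
Hypothesis hAK : forall n, cancel (A n) (Ainv n).
Hypothesis hAinvK : forall n, cancel (Ainv n) (A n).

Lemma coc_fwd m n j x : m = n + j%:Z -> cocycle A Ainv m n x = prodA A n j x.
Proof.
move=> ->; rewrite /cocycle ifT; last by rewrite lerDl.
by have -> : n + j%:Z - n = j%:Z by ring.
Qed.

Lemma coc_bwd m n j x : n = m + j%:Z -> cocycle A Ainv m n x = prodAinv Ainv n j x.
Proof.
move=> ->; rewrite /cocycle; case: j => [|j].
  by rewrite addr0 lexx subrr.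
rewrite ifF; last by apply/negbTE; rewrite -ltNge; lia.
by have -> : m + j.+1%:Z - m = j.+1%:Z by ring.
Qed.

Variable P : int -> X -> X.
Hypothesis hP : forall n, bounded_linear (P n).
Hypothesis hPA : forall m x, P (m + 1) (A m x) = A m (P m x).

Variable u : int -> X.
Hypothesis hu : forall n, u (n + 1) = A n (u n).

Lemma stab_iter m k : P (m + k%:Z) (u (m + k%:Z)) = prodA A m k (P m (u m)).
Proof.
elim: k => [|k IH]; first by rewrite addr0.
have -> : m + k.+1%:Z = (m + k%:Z) + 1 by lia.
by rewrite hu hPA IH.
Qed.

Lemma unst_iter k m : u m - P m (u m) =
  prodAinv Ainv (m + k%:Z) k (u (m + k%:Z) - P (m + k%:Z) (u (m + k%:Z))).
Proof.
elim: k m => [|k IH] m; first by rewrite addr0.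
rewrite /=.
have -> : m + k.+1%:Z - k.+1%:Z = m by ring.
have -> : m + k.+1%:Z = (m + 1) + k%:Z by lia.
rewrite -IH hu hPA -(linB (hA m)).
by rewrite (hAK m).
Qed.

Lemma sol_zero (C lam B : R) : 0 <= C -> 0 < lam ->
  (forall m n, n <= m -> forall x, `|cocycle A Ainv m n (P n x)| <= C * expR (- lam * (m - n)%:~R) * `|x|) ->
  (forall m n, m <= n -> forall x, `|cocycle A Ainv m n (x - P n x)| <= C * expR (- lam * (n - m)%:~R) * `|x|) ->
  (forall n, `|u n| <= B) -> forall n, u n = 0.
Proof.
move=> C0 l0 h1 h2 hB n.
have eP : P n (u n) = 0.
  apply/normr0_eq0; apply: (@small0 _ _ (C * B) lam) => //.
  move=> k; have e : n = n - k%:Z + k%:Z by ring.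
  have := stab_iter (n - k%:Z) k; rewrite -e => ->.
  have := h1 n (n - k%:Z) _ (u (n - k%:Z)).
  rewrite (@coc_fwd _ _ k) //.
  have -> : n - (n - k%:Z) = k%:Z by ring.
  move=> /(_ _)/le_trans; apply; first by lia.
  rewrite mulrAC; apply: ler_wpM2r; [exact: expR_ge0 | exact: ler_wpM2l].
have eQ : u n - P n (u n) = 0.
  apply/normr0_eq0; apply: (@small0 _ _ (C * B) lam) => //.
  move=> k; rewrite (unst_iter k).
  have := h2 n (n + k%:Z) _ (u (n + k%:Z)).
  rewrite (@coc_bwd _ _ k) //.
  have -> : n + k%:Z - n = k%:Z by ring.
  move=> /(_ _)/le_trans; apply; first by lia.
  rewrite mulrAC; apply: ler_wpM2r; [exact: expR_ge0 | exact: ler_wpM2l].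
by move/eqP: eQ; rewrite eP subr0 => /eqP.
Qed.
End Main.
Section Exist.
Variables (R : realType) (X : completeNormedModType R) (A Ainv : int -> X -> X).
Hypothesis hA : forall n, bounded_linear (A n).
Hypothesis hAK : forall n, cancel (A n) (Ainv n).
Hypothesis hAinvK : forall n, cancel (Ainv n) (A n).
Variable P : int -> X -> X.
Hypothesis hP : forall n, bounded_linear (P n).
Hypothesis hPA : forall m x, P (m + 1) (A m x) = A m (P m x).
Variables (C lam : R).
Hypothesis C0 : 0 < C.
Hypothesis l0 : 0 < lam.
Hypothesis h1 : forall m n, n <= m -> forall x, `|cocycle A Ainv m n (P n x)| <= C * expR (- lam * (m - n)%:~R) * `|x|.
Hypothesis h2 : forall m n, m <= n -> forall x, `|cocycle A Ainv m n (x - P n x)| <= C * expR (- lam * (n - m)%:~R) * `|x|.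
Variable z : int -> X.
Variable B : R.
Hypothesis B0 : 0 <= B.
Hypothesis hB : forall k, `|z k| <= B.

Definition stab n j := prodA A (n - j%:Z) j (P (n - j%:Z) (z (n - j%:Z - 1))).
Definition unst n j := prodAinv Ainv (n + j%:Z + 1) j.+1
   (z (n + j%:Z) - P (n + j%:Z + 1) (z (n + j%:Z))).

Lemma stab_bnd n j : `|stab n j| <= C * expR (- lam * j%:R) * `|z (n - j%:Z - 1)|.
Proof.
have := @h1 n (n - j%:Z) _ (z (n - j%:Z - 1)).
rewrite (@coc_fwd _ _ A Ainv _ _ j); last by ring.
have -> : n - (n - j%:Z) = j%:Z by ring.
by move=> H; apply: H; lia.
Qed.

Lemma unst_bnd n j : `|unst n j| <= C * expR (- lam * j%:R) * `|z (n + j%:Z)|.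
Proof.
have := @h2 n (n + j%:Z + 1) _ (z (n + j%:Z)).
rewrite (@coc_bwd _ _ A Ainv _ _ j.+1); last by lia.
have -> : n + j%:Z + 1 - n = j.+1%:Z by lia.
move=> H; apply: le_trans (H _) _; first by lia.
apply: ler_wpM2r => //; apply: ler_wpM2l; first exact: ltW.
rewrite ler_expR.
have : - lam * j.+1%:R <= - lam * j%:R by rewrite !mulNr lerN2 ler_pM2l // ler_nat.
by [].
Qed.



Lemma stab_cvg n : cvgn (series (stab n)).
Proof.
apply: normed_cvg.
apply: (@series_le_cvg _ _ (geometric (C * B) (expR (- lam)))).
- by move=> j; exact: normr_ge0.
- by move=> j; rewrite /geometric /= mulr_ge0 ?exprn_ge0 ?expR_ge0 // mulr_ge0 // ltW.
- move=> j /=; apply: le_trans (stab_bnd n j) _.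
  rewrite -expRM_natr mulrAC; apply: ler_wpM2r; first exact: expR_ge0.
  by apply: ler_wpM2l; [exact: ltW | exact: hB].
- apply: is_cvg_geometric_series; by rewrite ger0_norm ?expR_ge0 // expR_lt1 oppr_lt0.
Qed.

Lemma unst_cvg n : cvgn (series (unst n)).
Proof.
apply: normed_cvg.
apply: (@series_le_cvg _ _ (geometric (C * B) (expR (- lam)))).
- by move=> j; exact: normr_ge0.
- by move=> j; rewrite /geometric /= mulr_ge0 ?exprn_ge0 ?expR_ge0 // mulr_ge0 // ltW.
- move=> j /=; apply: le_trans (unst_bnd n j) _.
  rewrite -expRM_natr mulrAC; apply: ler_wpM2r; first exact: expR_ge0.
  by apply: ler_wpM2l; [exact: ltW | exact: hB].
- apply: is_cvg_geometric_series; by rewrite ger0_norm ?expR_ge0 // expR_lt1 oppr_lt0.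
Qed.

Definition s n := limn (series (stab n)).
Definition us n := limn (series (unst n)).
Definition w n := s n - us n.

Lemma stab_succ n j : stab (n + 1) j.+1 = A n (stab n j).
Proof.
rewrite /stab.
have -> : n + 1 - j.+1%:Z = n - j%:Z by lia.
rewrite [prodA _ _ j.+1 _]/=.
by have -> : n - j%:Z + j%:Z = n by ring.
Qed.

Lemma stab0 n : stab (n + 1) 0 = P (n + 1) (z n).
Proof.
rewrite /stab /=.
have -> : n + 1 - 0%:Z = n + 1 by ring.
by have -> : n + 1 - 1 = n by ring.
Qed.

Lemma stab_rec n N : series (stab (n + 1)) N.+1 = P (n + 1) (z n) + A n (series (stab n) N).
Proof.
rewrite /series /= big_nat_recl // stab0; congr (_ + _).
rewrite (big_morph (A n) (lin_add (hA n)) (lin0 (hA n))).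
by apply: eq_bigr => j _; exact: stab_succ.
Qed.

Lemma unst_succ n j : A n (unst n j.+1) = unst (n + 1) j.
Proof.
rewrite /unst [prodAinv _ _ j.+2 _]/=.
have -> : n + j.+1%:Z + 1 - j.+2%:Z = n by lia.
rewrite hAinvK.
by have -> : n + j.+1%:Z = n + 1 + j%:Z by lia.
Qed.

Lemma unst0 n : A n (unst n 0) = z n - P (n + 1) (z n).
Proof.
rewrite /unst /=.
have -> : n + 0%:Z + 1 - 1%:Z = n by lia.
rewrite hAinvK.
by have -> : n + 0%:Z = n by ring.
Qed.

Lemma unst_rec n N : A n (series (unst n) N.+1) = (z n - P (n + 1) (z n)) + series (unst (n + 1)) N.
Proof.
rewrite /series /= (big_morph (A n) (lin_add (hA n)) (lin0 (hA n))).
rewrite big_nat_recl // unst0; congr (_ + _).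
by apply: eq_bigr => j _; exact: unst_succ.
Qed.

Lemma s_rec n : s (n + 1) = P (n + 1) (z n) + A n (s n).
Proof.
have H1 : (fun N => series (stab (n + 1)) N.+1) @ \oo --> s (n + 1).
  by rewrite (cvg_shiftS (series (stab (n + 1)))); exact: (@stab_cvg (n + 1)).
have H2 : (fun N => series (stab (n + 1)) N.+1) @ \oo --> P (n + 1) (z n) + A n (s n).
  have -> : (fun N => series (stab (n + 1)) N.+1) =
            (fun N => P (n + 1) (z n) + A n (series (stab n) N)).
    by apply/funext => N; rewrite stab_rec.
  have H3 : (fun N => A n (series (stab n) N)) @ \oo --> A n (s n).
    exact: (lin_cvg (hA n) (@stab_cvg n)).
  exact: (cvgD (cvg_cst _) H3).
exact: (cvg_unique _ H1 H2).
Qed.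

Lemma us_rec n : A n (us n) = (z n - P (n + 1) (z n)) + us (n + 1).
Proof.
have H1 : (fun N => A n (series (unst n) N.+1)) @ \oo --> A n (us n).
  apply: (lin_cvg (hA n) (u := fun N => series (unst n) N.+1)).
  by rewrite (cvg_shiftS (series (unst n))); exact: (@unst_cvg n).
have H2 : (fun N => A n (series (unst n) N.+1)) @ \oo --> (z n - P (n + 1) (z n)) + us (n + 1).
  have -> : (fun N => A n (series (unst n) N.+1)) =
            (fun N => (z n - P (n + 1) (z n)) + series (unst (n + 1)) N).
    by apply/funext => N; rewrite unst_rec.
  exact: (cvgD (cvg_cst _) (@unst_cvg (n + 1))).
exact: (cvg_unique _ H1 H2).
Qed.

Lemma w_rec n : w (n + 1) = z n + A n (w n).
Proof.
rewrite /w s_rec (linB (hA n)) us_rec.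
set a := P (n + 1) (z n); set b := A n (s n); set c := us (n + 1); set d := z n.
rewrite opprD opprB addrA.
by rewrite [d + b]addrC -addrA [a - d]addrC !addrA addrK (addrC b a).
Qed.


Lemma series_norm_le (f : nat -> X) (K : R) : cvgn (series f) ->
  (forall N, \sum_(0 <= j < N) `|f j| <= K) -> `|limn (series f)| <= K.
Proof.
move=> cf hK; rewrite -lim_norm //; apply: limr_le; first exact: is_cvg_norm.
apply: nearW => N; rewrite /series /=.
exact: le_trans (ler_norm_sum _ _ _) (hK N).
Qed.

Lemma geom_partial (r : R) N : 0 <= r -> r < 1 -> \sum_(0 <= j < N) r ^+ j <= (1 - r)^-1.
Proof.
move=> r0 r1.
have := geometric_seriesE 1 (negbT (lt_eqF r1)).
move/(congr1 (fun f => f N)); rewrite /series /= => e.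
have -> : \sum_(0 <= j < N) r ^+ j = \sum_(0 <= j < N) geometric 1 r j.
  by apply: eq_bigr => j _; rewrite /= mul1r.
rewrite e mul1r -[leRHS]mul1r; apply: ler_wpM2r; first by rewrite invr_ge0 subr_ge0 ltW.
by rewrite gerBl exprn_ge0.
Qed.

Lemma w_bnd n (t : R) : 0 <= t ->
  (forall j, expR (- (lam / 2) * j%:R) * `|z (n - j%:Z - 1)| <= t) ->
  (forall j, expR (- (lam / 2) * j%:R) * `|z (n + j%:Z)| <= t) ->
  `|w n| <= 2 * (C * t * (1 - expR (- (lam / 2)))^-1).
Proof.
move=> t0 ha hc.
set sg := expR (- (lam / 2)).
have sg0 : 0 <= sg := expR_ge0 _.
have sg1 : sg < 1 by rewrite expR_lt1 oppr_lt0 divr_gt0.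
have key : forall j a, expR (- (lam / 2) * j%:R) * a <= t ->
    C * expR (- lam * j%:R) * a <= C * t * sg ^+ j.
  move=> j a h.
  have e : - lam * j%:R = - (lam / 2) * j%:R + - (lam / 2) * j%:R.
    by rewrite -mulrDl -opprD -splitr.
  have -> : sg ^+ j = expR (- (lam / 2) * j%:R) by rewrite /sg -expRM_natr.
  rewrite e expRD -!mulrA; apply: ler_wpM2l; first exact: ltW.
  by rewrite mulrC; apply: ler_wpM2r; first exact: expR_ge0.
set K := C * t * (1 - sg)^-1.
have hK : forall N (f : nat -> X), (forall j, `|f j| <= C * t * sg ^+ j) ->
    \sum_(0 <= j < N) `|f j| <= K.
  move=> N f hf.
  apply: (@le_trans _ _ (\sum_(0 <= j < N) C * t * sg ^+ j)).
    by apply: ler_sum => j _; exact: hf.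
  rewrite -mulr_sumr; apply: ler_wpM2l; first by rewrite mulr_ge0 // ltW.
  exact: geom_partial.
have hs : `|s n| <= K.
  apply: series_norm_le; first exact: (@stab_cvg n).
  move=> N; apply: hK => j; apply: le_trans (stab_bnd n j) _; exact: key (ha j).
have hu : `|us n| <= K.
  apply: series_norm_le; first exact: (@unst_cvg n).
  move=> N; apply: hK => j; apply: le_trans (unst_bnd n j) _; exact: key (hc j).
have := ler_normB (s n) (us n).
rewrite /w; lra.
Qed.
End Exist.
Section EsumLemmas.
Variable R : realType.
Local Open Scope ereal_scope.

Lemma esumZ_le (T : choiceType) (I : set T) (a : T -> \bar R) (c : R) :
  (0 <= c)%R -> (forall i, 0 <= a i) ->
  \esum_(i in I) (c%:E * a i) <= c%:E * \esum_(i in I) a i.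
Proof.
move=> c0 a0; apply: ge_ereal_sup => _ [Y [finY YI] <-] /=.
rewrite -ge0_mule_fsumr //; apply: lee_wpmul2l; first by rewrite lee_fin.
by apply: ereal_sup_ubound; exists Y.
Qed.

Lemma esum_term (T : choiceType) (f : T -> \bar R) i :
  (forall i, 0 <= f i) -> f i <= \esum_(j in [set: T]) f j.
Proof.
move=> f0; apply: esum_ge; exists [set i]; last by rewrite fsbig_set1.
by split => //; exact: finite_set1.
Qed.

Lemma esum_shift (f : int -> \bar R) (c : int) :
  \esum_(n in [set: int]) f (n + c)%R = \esum_(n in [set: int]) f n.
Proof.
rewrite [RHS](reindex_esum [set: int] [set: int] (fun n => n + c)%R f) //.
split => //; first by move=> x y _ _ /addIr.
by move=> y _; exists (y - c)%R => //; rewrite subrK.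
Qed.

Lemma esum_swap (f : int -> nat -> \bar R) : (forall i j, 0 <= f i j) ->
  \esum_(n in [set: int]) \esum_(j in [set: nat]) f n j =
  \esum_(j in [set: nat]) \esum_(n in [set: int]) f n j.
Proof.
move=> f0.
rewrite (esum_esum (fun i j _ _ => f0 i j)) (esum_esum (fun i j _ _ => f0 j i)).
rewrite (reindex_esum ([set: nat] `*`` fun _ => [set: int]) _ (fun x => (x.2, x.1))) //.
split => //.
- by move=> [a b] [x y] _ _ /= [-> ->].
- by move=> [a b] _; exists (b, a).
Qed.

Lemma pow_root (x t p : R) : (0 < p)%R -> (0 <= x)%R -> (0 <= t)%R ->
  (x `^ p <= t)%R -> (x <= t `^ p^-1)%R.
Proof.
move=> p0 x0 t0 h.
have -> : x = ((x `^ p) `^ p^-1)%R by rewrite -powRrM mulfV ?gt_eqF // powRr1.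
by apply: ge0_ler_powR => //; rewrite ?invr_ge0 ?ltW // nnegrE powR_ge0.
Qed.

Lemma pow_bound (f : int -> R) (p : R) : (0 < p)%R -> (forall i, 0 <= f i)%R ->
  \esum_(i in [set: int]) (f i `^ p)%:E < +oo -> exists B, (0 <= B)%R /\ forall i, (f i <= B)%R.
Proof.
move=> p0 f0 hS.
set S := \esum_(i in _) _ in hS.
have S0 : 0 <= S by apply: esum_ge0 => i _; rewrite lee_fin powR_ge0.
have Sfin : S \is a fin_num by rewrite ge0_fin_numE.
exists ((fine S) `^ p^-1)%R; split; first exact: powR_ge0.
move=> i; apply: pow_root => //; first by rewrite fine_ge0.
rewrite -lee_fin fineK //.
by apply: (@esum_term _ (fun i => (f i `^ p)%:E)) => j; rewrite lee_fin powR_ge0.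
Qed.

End EsumLemmas.
Section Geom.
Variable R : realType.
Lemma esum_geom (r : R) : 0 <= r -> r < 1 ->
  (\esum_(j in [set: nat]) (r ^+ j)%:E < +oo)%E.
Proof.
move=> r0 r1; rewrite -nneseries_esumT; last by move=> n; rewrite lee_fin exprn_ge0.
have hc : cvgn (series (geometric 1 r)) by apply: is_cvg_geometric_series; rewrite ger0_norm.
suff -> : (\sum_(j <oo) (r ^+ j)%:E)%E = (limn (series (geometric 1 r)))%:E by exact: ltry.
rewrite -EFin_lim //; congr (limn _); apply/funext => N /=.
by rewrite /series /= sumEFin; congr (_%:E); apply: eq_bigr => i _; rewrite mul1r.
Qed.
End Geom.
Section Lp.
Variables (R : realType) (X : normedModType R) (W z : int -> X) (p C lam : R).
Hypothesis p1 : 1 <= p.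
Hypothesis C0 : 0 < C.
Hypothesis l0 : 0 < lam.
Hypothesis hW : forall n (t : R), 0 <= t ->
  (forall j, expR (- (lam / 2) * j%:R) * `|z (n - j%:Z - 1)| <= t) ->
  (forall j, expR (- (lam / 2) * j%:R) * `|z (n + j%:Z)| <= t) ->
  `|W n| <= 2 * (C * t * (1 - expR (- (lam / 2)))^-1).
Hypothesis hZ : (\esum_(i in [set: int]) (`|z i| `^ p)%:E < +oo)%E.

Lemma esum_shift' (f : int -> \bar R) (g : int -> int) c :
  (forall n, g n = n + c) ->
  \esum_(n in [set: int]) f (g n) = \esum_(n in [set: int]) f n.
Proof.
move=> hg; rewrite -(esum_shift f c); apply: eq_esum => n _; by rewrite hg.
Qed.

Lemma lp_bound : (\esum_(n in [set: int]) (`|W n| `^ p)%:E < +oo)%E.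
Proof.
have p0 : 0 < p by apply: lt_le_trans p1; rewrite ltr01.
set a := fun k => `|z k| `^ p.
have a0 : forall k, 0 <= a k by move=> k; exact: powR_ge0.
set sg := expR (- (lam / 2)).
have sg1 : sg < 1 by rewrite expR_lt1 oppr_lt0 divr_gt0.
have c0pos : 0 < 2 * C * (1 - sg)^-1 by rewrite !mulr_gt0 // invr_gt0 subr_gt0.
set c0 := 2 * C * (1 - sg)^-1 in c0pos.
set rho := expR (- (lam * p / 2)).
have rho0 : 0 <= rho by exact: expR_ge0.
have rho1 : rho < 1 by rewrite expR_lt1 oppr_lt0 divr_gt0 // mulr_gt0.
set T := fun n => \esum_(j in [set: nat]) ((rho ^+ j * (a (n - j%:Z - 1) + a (n + j%:Z)))%:E).
have f0 : forall n j, (0 <= (rho ^+ j * (a (n - j%:Z - 1) + a (n + j%:Z)))%:E)%E.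
  by move=> n j; rewrite lee_fin mulr_ge0 ?exprn_ge0 ?addr_ge0.
have T0 : forall n, (0 <= T n)%E by move=> n; apply: esum_ge0 => j _.
have hrho : forall (j : nat) (b : R), 0 <= b ->
    (expR (- (lam / 2) * j%:R) * b) `^ p = rho ^+ j * b `^ p.
  move=> j b b0; rewrite powRM ?expR_ge0 // -expRM /rho -expRM_natr.
  by congr (expR _ * _); ring.
have claim : forall n, ((`|W n| `^ p)%:E <= (c0 `^ p)%:E * T n)%E.
  move=> n.
  have [Tfin|Tinf] := boolP (T n \is a fin_num); last first.
    have -> : T n = +oo%E.
      by move: Tinf; rewrite ge0_fin_numE // ltey negbK => /eqP.
    by rewrite gt0_muley ?leey // lte_fin powR_gt0.
  set t := fine (T n).
  have t0 : 0 <= t := fine_ge0 (T0 n).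
  have hterm : forall j, rho ^+ j * (a (n - j%:Z - 1) + a (n + j%:Z)) <= t.
    move=> j; rewrite -lee_fin /t fineK //.
    exact: (esum_term (f := fun j => ((rho ^+ j * (a (n - j%:Z - 1) + a (n + j%:Z)))%:E)) j (f0 n)).
  have ha : forall j, expR (- (lam / 2) * j%:R) * `|z (n - j%:Z - 1)| <= t `^ p^-1.
    move=> j; apply: pow_root; [exact: p0 | by rewrite mulr_ge0 ?expR_ge0 | exact: t0 |].
    rewrite hrho //; apply: le_trans (hterm j); apply: ler_wpM2l; first exact: exprn_ge0.
    by rewrite lerDl.
  have hc : forall j, expR (- (lam / 2) * j%:R) * `|z (n + j%:Z)| <= t `^ p^-1.
    move=> j; apply: pow_root; [exact: p0 | by rewrite mulr_ge0 ?expR_ge0 | exact: t0 |].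
    rewrite hrho //; apply: le_trans (hterm j); apply: ler_wpM2l; first exact: exprn_ge0.
    by rewrite lerDr.
  have hb : `|W n| <= c0 * t `^ p^-1.
    apply: le_trans (hW (powR_ge0 _ _) ha hc) _.
    by rewrite le_eqVlt; apply/orP; left; apply/eqP; rewrite /c0; ring.
  rewrite -(fineK Tfin) -/t -EFinM lee_fin.
  have -> : t = (t `^ p^-1) `^ p by rewrite -powRrM mulVf ?gt_eqF // powRr1.
  rewrite -powRM ?(ltW c0pos) ?powR_ge0 //.
  apply: (ge0_ler_powR (ltW p0)) => //; rewrite nnegrE //.
  by rewrite mulr_ge0 ?powR_ge0 // ltW.
set Z := \esum_(k in [set: int]) (a k)%:E.
have Zfin : Z \is a fin_num by rewrite ge0_fin_numE //; apply: esum_ge0 => k _; rewrite lee_fin.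
set Zr := fine Z.
have Zr0 : 0 <= Zr by rewrite fine_ge0 //; apply: esum_ge0 => k _; rewrite lee_fin.
have step3 : forall j, (\esum_(n in [set: int]) ((rho ^+ j * (a (n - j%:Z - 1) + a (n + j%:Z)))%:E)
    <= (Zr + Zr)%:E * (rho ^+ j)%:E)%E.
  move=> j.
  under eq_esum => n _ do rewrite EFinM EFinD.
  apply: le_trans (esumZ_le _ _ _) _; first exact: exprn_ge0.
    by move=> n; rewrite adde_ge0 // lee_fin.
  rewrite esumD; [|by move=> n _; rewrite lee_fin|by move=> n _; rewrite lee_fin].
  rewrite (esum_shift' (fun k => (a k)%:E) (c := - j%:Z - 1)); last by move=> n; ring.
  rewrite (esum_shift (fun k => (a k)%:E) j%:Z).
  by rewrite -/Z -(fineK Zfin) -/Zr -EFinD muleC.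
have Gfin : \esum_(j in [set: nat]) (rho ^+ j)%:E \is a fin_num.
  by rewrite ge0_fin_numE ?esum_geom //; apply: esum_ge0 => j _; rewrite lee_fin exprn_ge0.
have step1 : ((\esum_(n in [set: int]) (`|W n| `^ p)%:E) <=
    (c0 `^ p)%:E * (\esum_(n in [set: int]) T n))%E.
  apply: le_trans (esumZ_le _ (powR_ge0 _ _) T0).
  by apply: le_esum => n _; exact: claim.
apply: le_lt_trans step1 _.
rewrite /T esum_swap; last by move=> n j; exact: f0.
have step2 : ((c0 `^ p)%:E * (\esum_(j in [set: nat]) \esum_(n in [set: int])
     (rho ^+ j * (a (n - j%:Z - 1) + a (n + j%:Z)))%:E) <=
    (c0 `^ p)%:E * ((Zr + Zr)%:E * \esum_(j in [set: nat]) (rho ^+ j)%:E))%E.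
  apply: lee_wpmul2l; first by rewrite lee_fin powR_ge0.
  apply: le_trans (le_esum (fun j _ => step3 j)) _.
  by apply: esumZ_le; [rewrite addr_ge0 | move=> j; rewrite lee_fin exprn_ge0].
apply: le_lt_trans step2 _.
by rewrite -(fineK Gfin) -!EFinM ltry.
Qed.
End Lp.

Unset Implicit Arguments.

Theorem corollary3p9 (R : realType) (X : completeNormedModType R)
  (A Ainv : int -> X -> X) (p : R)
  (hA : forall n, bounded_linear (A n))
  (hAinv : forall n, bounded_linear (Ainv n))
  (hAK : forall n, cancel (A n) (Ainv n))
  (hAinvK : forall n, cancel (Ainv n) (A n))
  (hsup : exists M : R, forall n (x : X), `|A n x| <= M * `|x|)
  (hdich : exp_dichotomy A Ainv)
  (hp : 1 <= p)
  (y : int -> X)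
  (hy : sumZ_finite (fun n => `|y (n + 1) - A n (y n)| `^ p)) :
  exists! x : int -> X,
    (forall n, x (n + 1) = A n (x n)) /\
    sumZ_finite (fun n => `|x n - y n| `^ p).
Proof.
have [P [hPl [hPA [C [lam [C0 [l0 [h1 h2]]]]]]]] := hdich.
have p0 : 0 < p by apply: lt_le_trans hp; rewrite ltr01.
pose z := fun n => y (n + 1) - A n (y n).
have [B [B0 hB]] := @pow_bound R (fun i => `|z i|) p p0 (fun i => normr_ge0 _) hy.
pose W := w A Ainv P z.
have hWrec : forall n, W (n + 1) = z n + A n (W n) := w_rec hA hAinvK C0 l0 h1 h2 B0 hB.
have hx0 : (forall n, y (n + 1) - W (n + 1) = A n (y n - W n)) /\
    sumZ_finite (fun n => `|(y n - W n) - y n| `^ p).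
  split.
    move=> n; rewrite hWrec (linB (hA n) (y n) (W n)) /z.
    by rewrite opprD addrA opprB addrA (addrAC (y (n + 1))) subrr add0r.
  rewrite /sumZ_finite.
  have e : forall n, `|y n - W n - y n| = `|W n|.
    by move=> n; rewrite addrAC subrr add0r normrN.
  under eq_esum => n _ do rewrite e.
  apply: (lp_bound hp C0 l0 _ hy).
  by move=> n t t0 ha hc; exact: (w_bnd C0 l0 h1 h2 B0 hB t0 ha hc).
exists (fun n => y n - W n); split; first exact: hx0.
move=> x' [hx'1 hx'2].
have [B1 [_ hB1]] := @pow_bound R (fun i => `|y i - W i - y i|) p p0 (fun i => normr_ge0 _) hx0.2.
have [B2 [_ hB2]] := @pow_bound R (fun i => `|x' i - y i|) p p0 (fun i => normr_ge0 _) hx'2.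
apply/funext => n; apply/eqP; rewrite -subr_eq0; apply/eqP.
pose u := fun n => (y n - W n) - x' n.
apply: (@sol_zero R X A Ainv hA hAK P hPA u _ C lam (B1 + B2) (ltW C0) l0 h1 h2 _ n).
  by move=> k; rewrite /u hx0.1 hx'1 (linB (hA k) (y k - W k) (x' k)).
move=> k; rewrite /u.
set a := y k - W k.
have -> : a - x' k = (a - y k) - (x' k - y k) by rewrite opprB addrA subrK.
apply: le_trans (ler_normB _ _) _; apply: lerD; [exact: hB1 | exact: hB2].
Qed.
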